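(* For any $(2^{nR_1},2^{nR_2},n)$ code (with deterministic feedback encoders $x_{ki}=\phi_{ki}(w_k,z_k^{i-1})$) for the state-dependent discrete memoryless MAC with generalized feedback, with independent messages $W_1,W_2$, letting $Z_i=(Z_{1i},Z_{2i})$ and $Z^{i-1}=(Z_1,\dots,Z_{i-1})$, $$\sum_{i=1}^nI(X_{1i};X_{2i}\mid Z^{i-1})\le\sum_{i=1}^nI(X_{1i};X_{2i}\mid Z_i,Z^{i-1}).$$
   Context: Model: finite alphabets; states $S_i$ i.i.d. $\sim P_S$ independent of the messages; memoryless channel $P_{YZ_1Z_2|X_1X_2S}$ producing $(Y_i,Z_{1i},Z_{2i})$ from $(X_{1i},X_{2i},S_i)$; encoder $k$ maps its message $w_k$ and its past feedback $z_k^{i-1}=(z_{k1},\dots,z_{k,i-1})$ to $x_{ki}$. *)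

(* Defs.v *)
From HB Require Import structures.
From mathcomp Require Import all_boot.
From Stdlib Require Import Reals.

Set Implicit Arguments.
Unset Strict Implicit.
Unset Printing Implicit Defensive.

Lemma Rplus_assoc' : associative Rplus.
Proof. by move=> x y z; rewrite Rplus_assoc. Qed.
Lemma Rmult_assoc' : associative Rmult.
Proof. by move=> x y z; rewrite Rmult_assoc. Qed.
HB.instance Definition _ := Monoid.isComLaw.Build R R0 Rplus Rplus_assoc' Rplus_comm Rplus_0_l.
HB.instance Definition _ := Monoid.isComLaw.Build R R1 Rmult Rmult_assoc' Rmult_comm Rmult_1_l.

Definition Rsum (T : finType) (f : T -> R) : R := \big[Rplus/R0]_(x : T) f x.

Definition log2 (x : R) : R := (ln x / ln 2)%R.

Definition pmfRV (Om A : finType) (p : Om -> R) (X : Om -> A) (a : A) : R :=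
  \big[Rplus/R0]_(w : Om | X w == a) p w.

(* Conditional mutual information I(X;Y|Z) (in bits), with 0 log 0 = 0. *)
Definition condMI (Om A B C : finType) (p : Om -> R)
    (X : Om -> A) (Y : Om -> B) (Z : Om -> C) : R :=
  Rsum (fun a : A => Rsum (fun b : B => Rsum (fun c : C =>
    let pabc := pmfRV p (fun w => (X w, Y w, Z w)) (a, b, c) in
    let pac := pmfRV p (fun w => (X w, Z w)) (a, c) in
    let pbc := pmfRV p (fun w => (Y w, Z w)) (b, c) in
    let pc := pmfRV p Z c in
    if Rlt_dec R0 pabc then (pabc * log2 (pabc * pc / (pac * pbc)))%R
    else R0))).

(* Sample space of a length-n code: messages (w1,w2) and, for each time i,
   the tuple (S_i, Y_i, Z_{1i}, Z_{2i}). *)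
Definition traj (n : nat) (S Y Z1 Z2 : finType) :=
  {ffun 'I_n -> S * Y * Z1 * Z2}.
Definition omega (M1 M2 n : nat) (S Y Z1 Z2 : finType) :=
  ('I_M1 * 'I_M2 * traj n S Y Z1 Z2)%type.

(* z_1^{i-1} and z_2^{i-1}: feedback strictly before time i (0-indexed). *)
Definition past1 (n : nat) (S Y Z1 Z2 : finType) (t : traj n S Y Z1 Z2)
    (i : 'I_n) : seq Z1 :=
  map (fun j : 'I_n => (t j).1.2) (filter (fun j : 'I_n => (j < i)%N) (enum 'I_n)).
Definition past2 (n : nat) (S Y Z1 Z2 : finType) (t : traj n S Y Z1 Z2)
    (i : 'I_n) : seq Z2 :=
  map (fun j : 'I_n => (t j).2) (filter (fun j : 'I_n => (j < i)%N) (enum 'I_n)).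

Definition xin1 (M1 M2 n : nat) (S Y Z1 Z2 X1 : finType)
    (phi1 : 'I_n -> 'I_M1 -> seq Z1 -> X1)
    (o : omega M1 M2 n S Y Z1 Z2) (i : 'I_n) : X1 :=
  phi1 i o.1.1 (past1 o.2 i).
Definition xin2 (M1 M2 n : nat) (S Y Z1 Z2 X2 : finType)
    (phi2 : 'I_n -> 'I_M2 -> seq Z2 -> X2)
    (o : omega M1 M2 n S Y Z1 Z2) (i : 'I_n) : X2 :=
  phi2 i o.1.2 (past2 o.2 i).

(* Joint pmf induced by the code: independent uniform messages, i.i.d. states
   independent of messages, memoryless channel
   W y z1 z2 x1 x2 s = P_{Y Z1 Z2 | X1 X2 S}(y,z1,z2 | x1,x2,s). *)
Definition codePmf (M1 M2 n : nat) (S Y Z1 Z2 X1 X2 : finType)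
    (PS : S -> R) (W : X1 -> X2 -> S -> Y -> Z1 -> Z2 -> R)
    (phi1 : 'I_n -> 'I_M1 -> seq Z1 -> X1)
    (phi2 : 'I_n -> 'I_M2 -> seq Z2 -> X2)
    (o : omega M1 M2 n S Y Z1 Z2) : R :=
  (/ INR M1 * / INR M2 *
   \big[Rmult/R1]_(i : 'I_n)
     (PS (o.2 i).1.1.1 *
      W (xin1 phi1 o i) (xin2 phi2 o i) (o.2 i).1.1.1
        (o.2 i).1.1.2 (o.2 i).1.2 (o.2 i).2))%R.

Definition Zat (M1 M2 n : nat) (S Y Z1 Z2 : finType) (i : 'I_n)
    (o : omega M1 M2 n S Y Z1 Z2) : Z1 * Z2 :=
  ((o.2 i).1.2, (o.2 i).2).

Definition Zpast (M1 M2 n : nat) (S Y Z1 Z2 : finType) (i : 'I_n)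
    (o : omega M1 M2 n S Y Z1 Z2) : {ffun 'I_n -> option (Z1 * Z2)} :=
  [ffun j : 'I_n => if (j < i)%N then Some (Zat j o) else None].

(* Main.v *)
Require Import Defs.
From HB Require Import structures.
From mathcomp Require Import all_boot.
From Stdlib Require Import Reals Lra.

Set Implicit Arguments.
Unset Strict Implicit.
Unset Printing Implicit Defensive.

Lemma Rmult_0l' : left_zero R0 Rmult. Proof. move=> x; exact: Rmult_0_l. Qed.
Lemma Rmult_0r' : right_zero R0 Rmult. Proof. move=> x; exact: Rmult_0_r. Qed.
HB.instance Definition _ := Monoid.isMulLaw.Build R R0 Rmult Rmult_0l' Rmult_0r'.
Lemma RDl' : left_distributive Rmult Rplus. Proof. move=> x y z; exact: Rmult_plus_distr_r. Qed.
Lemma RDr' : right_distributive Rmult Rplus. Proof. move=> x y z; exact: Rmult_plus_distr_l. Qed.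
HB.instance Definition _ := Monoid.isAddLaw.Build R Rmult Rplus RDl' RDr'.

Open Scope R_scope.

Notation "\rsum_ ( i | P ) F" := (\big[Rplus/R0]_(i | P) F) (at level 41, F at level 41, i at level 50).
Notation "\rsum_ i F" := (\big[Rplus/R0]_i F) (at level 41, F at level 41, i at level 0).

Lemma sumR_le (I : finType) (P : pred I) (F G : I -> R) :
  (forall i, P i -> F i <= G i) ->
  \big[Rplus/R0]_(i | P i) F i <= \big[Rplus/R0]_(i | P i) G i.
Proof.
move=> H; apply: (big_ind2 (fun x y => x <= y)); [lra| |exact: H].
move=> *; lra.
Qed.

Lemma sumR_ge0 (I : finType) (P : pred I) (F : I -> R) :
  (forall i, P i -> 0 <= F i) -> 0 <= \big[Rplus/R0]_(i | P i) F i.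
Proof.
move=> H; apply: (big_ind (fun x => 0 <= x)); [lra| |exact: H].
move=> *; lra.
Qed.

Lemma sumR_opp (I : finType) (P : pred I) (F : I -> R) :
  \big[Rplus/R0]_(i | P i) (- F i) = - \big[Rplus/R0]_(i | P i) F i.
Proof.
rewrite (big_morph Ropp (id1:=R0) (op1:=Rplus)) //.
  by move=> x y; rewrite Ropp_plus_distr.
by rewrite Ropp_0.
Qed.

Lemma sumR_sub (I : finType) (P : pred I) (F G : I -> R) :
  \big[Rplus/R0]_(i | P i) (F i - G i) =
  \big[Rplus/R0]_(i | P i) F i - \big[Rplus/R0]_(i | P i) G i.
Proof. by rewrite /Rminus big_split /= sumR_opp. Qed.

Lemma sumR_scal (I : finType) (P : pred I) (F : I -> R) a :
  \big[Rplus/R0]_(i | P i) (a * F i) = a * \big[Rplus/R0]_(i | P i) F i.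
Proof. by rewrite big_distrr. Qed.

Lemma sumR_const (I : finType) c :
  \big[Rplus/R0]_(i : I) c = INR #|I| * c.
Proof.
rewrite big_const cardE; elim: (size (enum I)) => [|k IH] /=.
  by rewrite Rmult_0_l.
rewrite IH; case: k {IH} => [|k] /=; ring.
Qed.

Lemma ln_ge_1m (x : R) : 0 < x -> 1 - / x <= ln x.
Proof.
move=> hx.
have h := exp_ineq1_le (ln (/ x)).
rewrite exp_ln in h; last exact: Rinv_0_lt_compat.
rewrite ln_Rinv // in h; lra.
Qed.

Lemma ln2_pos : 0 < ln 2.
Proof.
have h1 := ln_lt_2.
have h2 : 0 < / 2 by apply: Rinv_0_lt_compat; lra.
lra.
Qed.

Lemma sumR_subpred (I : finType) (P Q : pred I) (F : I -> R) :
  (forall i, P i -> Q i) -> (forall i, 0 <= F i) ->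
  \big[Rplus/R0]_(i | P i) F i <= \big[Rplus/R0]_(i | Q i) F i.
Proof.
move=> PQ F0; rewrite (big_mkcond P) (big_mkcond Q); apply: sumR_le => i _.
case: (boolP (P i)) => Pi; first by rewrite (PQ _ Pi); lra.
case: (Q i); [exact: F0 | lra].
Qed.

Definition lnp (x : R) : R := if Rlt_dec 0 x then ln x else 0.

Lemma lnp_pos x : 0 < x -> lnp x = ln x.
Proof. by rewrite /lnp; case: Rlt_dec. Qed.

Section Info.
Variables (Om : finType) (p : Om -> R).
Hypothesis p0 : forall w, 0 <= p w.

Definition NN (A : finType) (U : Om -> A) : R :=
  \big[Rplus/R0]_(w : Om) (p w * lnp (pmfRV p U (U w))).

Definition JJ (A B C : finType) (X : Om -> A) (Y : Om -> B) (Z : Om -> C) : R :=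
  NN (fun w => (X w, Y w, Z w)) + NN Z - NN (fun w => (X w, Z w))
  - NN (fun w => (Y w, Z w)).

Lemma pm_ge0 (A : finType) (U : Om -> A) a : 0 <= pmfRV p U a.
Proof. by apply: sumR_ge0 => w _; exact: p0. Qed.

Lemma pm_self (A : finType) (U : Om -> A) w : p w <= pmfRV p U (U w).
Proof.
rewrite /pmfRV (bigD1 w) //=.
have := @sumR_ge0 Om (fun i => (U i == U w) && (i != w)) p (fun i _ => p0 i).
lra.
Qed.

Lemma pm_mono (A B : finType) (U : Om -> A) (V : Om -> B) u v :
  (forall w, U w = u -> V w = v) -> pmfRV p U u <= pmfRV p V v.
Proof.
move=> H; apply: sumR_subpred => // w /eqP /H ->; exact: eqxx.
Qed.

Lemma expect (A : finType) (U : Om -> A) (h : A -> R) :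
  \big[Rplus/R0]_(a : A) (pmfRV p U a * h a) =
  \big[Rplus/R0]_(w : Om) (p w * h (U w)).
Proof.
rewrite (partition_big U (fun _ => true)) //=; apply: eq_bigr => a _.
rewrite /pmfRV big_distrl /=; apply: eq_bigr => w /eqP <-; done.
Qed.

Lemma marg (A C : finType) (X : Om -> A) (Z : Om -> C) c :
  \big[Rplus/R0]_(a : A) pmfRV p (fun w => (X w, Z w)) (a, c) = pmfRV p Z c.
Proof.
rewrite /pmfRV (partition_big X (fun _ => true)) //=; apply: eq_bigr => a _.
by apply: eq_bigl => w; rewrite xpair_eqE andbC.
Qed.

Lemma marg2 (A B C : finType) (X : Om -> A) (Y : Om -> B) (Z : Om -> C) c :
  \big[Rplus/R0]_(a : A) \big[Rplus/R0]_(b : B)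
     pmfRV p (fun w => (X w, Y w, Z w)) (a, b, c) = pmfRV p Z c.
Proof.
rewrite pair_big /= -(marg (fun w => (X w, Y w))).
by apply: eq_bigr => -[a b].
Qed.

Lemma NN_eq (A B : finType) (U : Om -> A) (V : Om -> B) :
  (forall w w', U w = U w' <-> V w = V w') -> NN U = NN V.
Proof.
move=> H; apply: eq_bigr => w _; congr (_ * lnp _).
apply: eq_bigl => w'; apply/eqP/eqP; by move/H.
Qed.

End Info.

Section Info2.
Variables (Om : finType) (p : Om -> R).
Hypothesis p0 : forall w, 0 <= p w.

Lemma pm_rinv_ge0 (x y z : R) : 0 <= x -> 0 <= y -> 0 <= z -> 0 <= x * y * / z.
Proof.
move=> hx hy hz; apply: Rmult_le_pos; first exact: Rmult_le_pos.
case: (Req_dec z 0) => [->|nz]; first by rewrite Rinv_0; lra.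
left; apply: Rinv_0_lt_compat; lra.
Qed.

Lemma condMI_ge0 (A B C : finType) (X : Om -> A) (Y : Om -> B) (Z : Om -> C) :
  0 <= condMI p X Y Z.
Proof.
pose pabc a b c := pmfRV p (fun w => (X w, Y w, Z w)) (a, b, c).
pose pac a c := pmfRV p (fun w => (X w, Z w)) (a, c).
pose pbc b c := pmfRV p (fun w => (Y w, Z w)) (b, c).
pose pc c := pmfRV p Z c.
pose L a b c := / ln 2 * (pabc a b c - pac a c * pbc b c * / pc c).
have ln2 := ln2_pos.
have il2 : 0 < / ln 2 by apply: Rinv_0_lt_compat.
apply: (@Rle_trans _ (\big[Rplus/R0]_(a : A) \big[Rplus/R0]_(b : B) \big[Rplus/R0]_(c : C) L a b c)).
  right; rewrite /L /pabc /pac /pbc /pc.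
  under eq_bigr do rewrite exchange_big /=.
  rewrite exchange_big /=; symmetry; apply: big1 => c _.
  under eq_bigr do rewrite sumR_scal.
  rewrite sumR_scal; apply: Rmult_eq_0_compat_l.
  under eq_bigr do rewrite sumR_sub.
  rewrite sumR_sub.
  have -> : \big[Rplus/R0]_(a : A) \big[Rplus/R0]_(b : B)
     (pmfRV p (fun w => (X w, Z w)) (a, c) * pmfRV p (fun w => (Y w, Z w)) (b, c) * / pmfRV p Z c)
            = pmfRV p Z c * pmfRV p Z c * / pmfRV p Z c.
    transitivity (\big[Rplus/R0]_(a : A) (pmfRV p (fun w => (X w, Z w)) (a, c) * / pmfRV p Z c * pmfRV p Z c)).
      apply: eq_bigr => a _.
      rewrite -{3}(marg p Y Z c) big_distrr /=; apply: eq_bigr => b _; ring.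
    rewrite -big_distrl /= -big_distrl /= (marg p X Z c); ring.
  rewrite (marg2 p X Y Z c).
  case: (Req_dec (pmfRV p Z c) 0) => [->|nz]; first ring.
  by field.
apply: sumR_le => a _; apply: sumR_le => b _; apply: sumR_le => c _.
rewrite /L.
have gac : pabc a b c <= pac a c by apply: (pm_mono p0) => w [-> _ ->].
have gbc : pabc a b c <= pbc b c by apply: (pm_mono p0) => w [_ -> ->].
have gc : pabc a b c <= pc c by apply: (pm_mono p0) => w [_ _ ->].
case: Rlt_dec => h /=.
  rewrite /log2.
  fold (pabc a b c) in h; fold (pabc a b c) (pac a c) (pbc b c) (pc c).
  have hac : 0 < pac a c by lra.
  have hbc : 0 < pbc b c by lra.
  have hc : 0 < pc c by lra.
  have r0 : 0 < pabc a b c * pc c / (pac a c * pbc b c).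
    apply: Rdiv_lt_0_compat; first exact: Rmult_lt_0_compat.
    exact: Rmult_lt_0_compat.
  have := ln_ge_1m r0.
  have -> : / (pabc a b c * pc c / (pac a c * pbc b c)) =
            pac a c * pbc b c / (pabc a b c * pc c) by field; lra.
  move=> hl.
  have e : pabc a b c - pac a c * pbc b c * / pc c =
           pabc a b c * (1 - pac a c * pbc b c / (pabc a b c * pc c)).
    by field; lra.
  rewrite e /Rdiv (Rmult_comm (/ ln 2)) Rmult_assoc.
  rewrite /Rdiv in hl.
  apply Rmult_le_compat_l; [lra|]; apply Rmult_le_compat_r; [lra|exact hl].
have z : pabc a b c = 0 by have := pm_ge0 p0 (fun w => (X w, Y w, Z w)) (a, b, c); rewrite /pabc in h *; lra.
rewrite z.
have := pm_rinv_ge0 (pm_ge0 p0 (fun w => (X w, Z w)) (a, c))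
          (pm_ge0 p0 (fun w => (Y w, Z w)) (b, c)) (pm_ge0 p0 Z c).
rewrite /pac /pbc /pc => q.
have : 0 <= / ln 2 * (pmfRV p (fun w => (X w, Z w)) (a, c) * pmfRV p (fun w => (Y w, Z w)) (b, c) * / pmfRV p Z c) by apply: Rmult_le_pos; lra.
lra.
Qed.

End Info2.

Lemma pair_sumR (I J : finType) (F : I * J -> R) :
  \big[Rplus/R0]_(v : I * J) F v = \big[Rplus/R0]_(i : I) \big[Rplus/R0]_(j : J) F (i, j).
Proof. by rewrite pair_big /=; apply: eq_bigr => -[i j]. Qed.

Lemma sumR_scalT (I : finType) (F : I -> R) a :
  \big[Rplus/R0]_(i : I) (a * F i) = a * \big[Rplus/R0]_(i : I) F i.
Proof. by rewrite big_distrr. Qed.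

Lemma sumR_subT (I : finType) (F G : I -> R) :
  \big[Rplus/R0]_(i : I) (F i - G i) =
  \big[Rplus/R0]_(i : I) F i - \big[Rplus/R0]_(i : I) G i.
Proof. exact: sumR_sub. Qed.

Lemma sum4 (I : finType) (F G H K : I -> R) :
  \big[Rplus/R0]_(i : I) (F i + G i - H i - K i) =
  \big[Rplus/R0]_(i : I) F i + \big[Rplus/R0]_(i : I) G i
  - \big[Rplus/R0]_(i : I) H i - \big[Rplus/R0]_(i : I) K i.
Proof. by rewrite !sumR_subT big_split. Qed.

Section Info3.
Variables (Om : finType) (p : Om -> R).
Hypothesis p0 : forall w, 0 <= p w.

Lemma pm_pos (A : finType) (U : Om -> A) w : 0 < p w -> 0 < pmfRV p U (U w).
Proof. have := pm_self p0 U w; lra. Qed.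

Lemma condMI_J (A B C : finType) (X : Om -> A) (Y : Om -> B) (Z : Om -> C) :
  condMI p X Y Z = / ln 2 * JJ p X Y Z.
Proof.
pose XYZ := fun w => (X w, Y w, Z w).
pose h (v : A * B * C) := log2 (pmfRV p XYZ v * pmfRV p Z v.2 /
   (pmfRV p (fun w => (X w, Z w)) (v.1.1, v.2) * pmfRV p (fun w => (Y w, Z w)) (v.1.2, v.2))).
rewrite /condMI /Rsum.
transitivity (\big[Rplus/R0]_(v : A * B * C) (pmfRV p XYZ v * h v)).
  rewrite pair_sumR pair_sumR.
  apply: eq_bigr => a _; apply: eq_bigr => b _; apply: eq_bigr => c _.
  case: Rlt_dec => hp /=; first done.
  have z : pmfRV p (fun w => (X w, Y w, Z w)) (a,b,c) = 0.
    by have := pm_ge0 p0 (fun w => (X w, Y w, Z w)) (a, b, c); lra.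
  by rewrite /XYZ z Rmult_0_l.
rewrite (expect p XYZ h) /JJ /NN.
rewrite -sum4 -sumR_scalT; apply: eq_bigr => w _.
case: (Req_dec (p w) 0) => [->|nz]; first ring.
have pw : 0 < p w by have := p0 w; lra.
have h1 := pm_pos XYZ pw.
have h2 := pm_pos Z pw.
have h3 := pm_pos (fun w => (X w, Z w)) pw.
have h4 := pm_pos (fun w => (Y w, Z w)) pw.
rewrite /h /= /log2 !lnp_pos //.
rewrite /Rdiv ln_mult; last first.
  apply: Rinv_0_lt_compat; exact: Rmult_lt_0_compat.
  exact: Rmult_lt_0_compat.
rewrite ln_Rinv; last exact: Rmult_lt_0_compat.
rewrite !ln_mult // /XYZ; ring.
Qed.

Lemma JJ_ge0 (A B C : finType) (X : Om -> A) (Y : Om -> B) (Z : Om -> C) :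
  0 <= JJ p X Y Z.
Proof.
have := condMI_ge0 p0 X Y Z; rewrite condMI_J.
have := ln2_pos => l2 h.
have il : 0 < ln 2 by [].
have : JJ p X Y Z = ln 2 * (/ ln 2 * JJ p X Y Z) by field; lra.
move=> ->; apply: Rmult_le_pos; lra.
Qed.

Lemma NN_markov (A D : finType) (U : Om -> A) (Dv : Om -> D) (q : Om -> D -> R) :
  (forall w d, pmfRV p (fun w => (U w, Dv w)) (U w, d) = pmfRV p U (U w) * q w d) ->
  NN p (fun w => (U w, Dv w)) = NN p U + \big[Rplus/R0]_(w : Om) (p w * lnp (q w (Dv w))).
Proof.
move=> H; rewrite /NN -big_split /=; apply: eq_bigr => w _.
case: (Req_dec (p w) 0) => [->|nz]; first ring.
have pw : 0 < p w by have := p0 w; lra.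
have h1 := pm_pos (fun w => (U w, Dv w)) pw.
have h2 := pm_pos U pw.
rewrite H in h1 *.
have hq : 0 < q w (Dv w).
  case: (Rlt_le_dec 0 (q w (Dv w))) => // hq.
  have : pmfRV p U (U w) * q w (Dv w) <= 0.
    rewrite -(Rmult_0_r (pmfRV p U (U w))); apply Rmult_le_compat_l; lra.
  lra.
rewrite !lnp_pos // ln_mult //; ring.
Qed.

End Info3.

Section Model.
Variables (M1 M2 n : nat) (S Y Z1 Z2 X1 X2 : finType).
Variables (PS : S -> R) (W : X1 -> X2 -> S -> Y -> Z1 -> Z2 -> R).
Variables (phi1 : 'I_n -> 'I_M1 -> seq Z1 -> X1) (phi2 : 'I_n -> 'I_M2 -> seq Z2 -> X2).
Hypothesis hPS0 : forall s, 0 <= PS s.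
Hypothesis hPS1 : Rsum PS = 1.
Hypothesis hW0 : forall x1 x2 s y z1 z2, 0 <= W x1 x2 s y z1 z2.
Hypothesis hW1 : forall x1 x2 s,
  Rsum (fun yz : Y * Z1 * Z2 => W x1 x2 s yz.1.1 yz.1.2 yz.2) = 1.

Local Notation V := (S * Y * Z1 * Z2)%type.
Local Notation trj := {ffun 'I_n -> V}.
Local Notation Om := (omega M1 M2 n S Y Z1 Z2).
Local Notation p := (codePmf PS W phi1 phi2).

Definition c0 := / INR M1 * / INR M2.

Definition FF (j : 'I_n) (a : 'I_M1) (b : 'I_M2) (t : trj) : R :=
  PS (t j).1.1.1 * W (phi1 j a (past1 t j)) (phi2 j b (past2 t j))
     (t j).1.1.1 (t j).1.1.2 (t j).1.2 (t j).2.

Lemma pE a b t : p ((a, b), t) = c0 * \big[Rmult/R1]_(j : 'I_n) FF j a b t.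
Proof. by rewrite /codePmf /c0. Qed.

Lemma FF_ge0 j a b t : 0 <= FF j a b t.
Proof. apply: Rmult_le_pos; [exact: hPS0 | exact: hW0]. Qed.

Lemma prodR_ge0 (I : finType) (P : pred I) (F : I -> R) :
  (forall i, 0 <= F i) -> 0 <= \big[Rmult/R1]_(i | P i) F i.
Proof.
move=> H; apply: (big_ind (fun x => 0 <= x)); [lra| |move=> i _; exact: H].
move=> x y hx hy; exact: Rmult_le_pos.
Qed.

Lemma c0_ge0 : 0 <= c0.
Proof.
rewrite /c0; apply: Rmult_le_pos.
  case: M1 => [|m]; first by rewrite /= Rinv_0; lra.
  left; apply: Rinv_0_lt_compat; apply: lt_0_INR; apply/ltP.
  by [].
case: M2 => [|m]; first by rewrite /= Rinv_0; lra.
left; apply: Rinv_0_lt_compat; apply: lt_0_INR; apply/ltP.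
by [].
Qed.

Lemma p0 (o : Om) : 0 <= p o.
Proof.
case: o => -[a b] t; rewrite pE; apply: Rmult_le_pos; first exact: c0_ge0.
apply: prodR_ge0 => j; exact: FF_ge0.
Qed.

Definition agree (t t' : trj) (k : nat) := forall l : 'I_n, (l < k)%nat -> t l = t' l.

Lemma past1_agree t t' (j : 'I_n) : agree t t' j -> past1 t j = past1 t' j.
Proof.
move=> H; rewrite /past1; apply/eq_in_map => l; rewrite mem_filter => /andP [hl _].
by rewrite H.
Qed.

Lemma past2_agree t t' (j : 'I_n) : agree t t' j -> past2 t j = past2 t' j.
Proof.
move=> H; rewrite /past2; apply/eq_in_map => l; rewrite mem_filter => /andP [hl _].
by rewrite H.
Qed.

Lemma agree_le t t' k k' : (k' <= k)%nat -> agree t t' k -> agree t t' k'.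
Proof. move=> hk H l hl; apply: H; exact: leq_trans hl hk. Qed.

Lemma FF_agree (j : 'I_n) a b t t' : agree t t' j.+1 -> FF j a b t = FF j a b t'.
Proof.
move=> H; rewrite /FF (past1_agree (agree_le (leqnSn _) H))
  (past2_agree (agree_le (leqnSn _) H)) (H j) //.
Qed.

Definition upd (t : trj) (k : 'I_n) (v : V) : trj :=
  [ffun l => if l == k then v else t l].

Lemma upd_agree t (k : 'I_n) v m : (m <= k)%nat -> agree (upd t k v) t m.
Proof.
move=> hm l hl; rewrite /upd ffunE; case: eqP => // e.
by move: hl; rewrite e ltnNge hm.
Qed.

Lemma FF_upd (j : 'I_n) a b t v :
  FF j a b (upd t j v) =
  PS v.1.1.1 * W (phi1 j a (past1 t j)) (phi2 j b (past2 t j)) v.1.1.1 v.1.1.2 v.1.2 v.2.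
Proof.
rewrite /FF (past1_agree (upd_agree t v (leqnn j))) (past2_agree (upd_agree t v (leqnn j))).
by rewrite /upd ffunE eqxx.
Qed.

Lemma sumV (G : V -> R) :
  \big[Rplus/R0]_(v : V) G v =
  \big[Rplus/R0]_(s : S) \big[Rplus/R0]_(y : Y) \big[Rplus/R0]_(z1 : Z1)
     \big[Rplus/R0]_(z2 : Z2) G (s, y, z1, z2).
Proof.
rewrite pair_sumR pair_sumR pair_sumR; done.
Qed.

Lemma FF_norm (j : 'I_n) a b t : \big[Rplus/R0]_(v : V) FF j a b (upd t j v) = 1.
Proof.
under eq_bigr do rewrite FF_upd.
rewrite sumV -hPS1 /Rsum; apply: eq_bigr => s _ /=.
rewrite -[RHS]Rmult_1_r -(hW1 (phi1 j a (past1 t j)) (phi2 j b (past2 t j)) s) /Rsum.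
rewrite pair_sumR pair_sumR.
rewrite big_distrr /=; apply: eq_bigr => y _.
rewrite big_distrr /=; apply: eq_bigr => z1 _.
rewrite big_distrr /=; apply: eq_bigr => z2 _ //.
Qed.


Lemma upd_at t (k : 'I_n) v : upd t k v k = v.
Proof. by rewrite /upd ffunE eqxx. Qed.

Lemma upd_upd t (k : 'I_n) v w : upd (upd t k v) k w = upd t k w.
Proof. by apply/ffunP => l; rewrite /upd !ffunE; case: eqP. Qed.

Lemma upd_id t (k : 'I_n) : upd t k (t k) = t.
Proof. by apply/ffunP => l; rewrite /upd !ffunE; case: eqP => // ->. Qed.

Lemma upd_eqE t (k : 'I_n) v : (upd t k v == t) = (t k == v).
Proof.
apply/eqP/eqP => [<-|<-]; first by rewrite upd_at.
exact: upd_id.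
Qed.

Lemma split_sum (jk : 'I_n) (v0 : V) (Q : pred trj) (H : trj -> R) :
  (forall t v, Q (upd t jk v) = Q t) ->
  \big[Rplus/R0]_(t | Q t) H t =
  \big[Rplus/R0]_(t | Q t && (t jk == v0)) \big[Rplus/R0]_(v : V) H (upd t jk v).
Proof.
move=> hQ.
rewrite (partition_big (fun t : trj => t jk) xpredT) //= exchange_big /=.
apply: eq_bigr => v _.
rewrite (reindex_onto (fun t => upd t jk v) (fun t => upd t jk v0)) /=.
  apply: eq_bigl => t; rewrite hQ upd_at eqxx andbT upd_upd upd_eqE.
  by [].
move=> t /andP [_ /eqP <-]; rewrite upd_upd; exact: upd_id.
Qed.

Section Fut.
Variable v0 : V.
Variables (a : 'I_M1) (b : 'I_M2).

Definition Pin (k : nat) (t : trj) : bool :=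
  [forall l : 'I_n, (k <= l)%nat ==> (t l == v0)].

Lemma Pin_upd k (jk : 'I_n) t v : (jk < k)%nat -> Pin k (upd t jk v) = Pin k t.
Proof.
move=> hk; apply: eq_forallb => l; rewrite /upd ffunE.
case: (l =P jk) => // ->; by rewrite leqNgt hk.
Qed.

Lemma Pin_S (jk : 'I_n) t : Pin jk t = Pin jk.+1 t && (t jk == v0).
Proof.
apply/forallP/andP => [H|[/forallP H1 e] l].
  split; last by have := H jk; rewrite leqnn.
  by apply/forallP => l; apply/implyP => hl; have := H l; rewrite (ltnW hl).
apply/implyP => hl; case: (ltngtP jk l) => hh.
- by have := H1 l; rewrite hh.
- by move: hl; rewrite leqNgt hh.
- by have -> : l = jk by apply: val_inj.
Qed.

Lemma prod_S (jk : 'I_n) (F : 'I_n -> R) :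
  \big[Rmult/R1]_(j : 'I_n | (j < jk.+1)%nat) F j = F jk * \big[Rmult/R1]_(j : 'I_n | (j < jk)%nat) F j.
Proof.
rewrite (bigD1 jk) //=; congr (_ * _); apply: eq_bigl => j.
by rewrite ltnS ltn_neqAle andbC; congr (_ && _); rewrite -val_eqE.
Qed.

Lemma step (jk : 'I_n) (g : trj -> R) (phi : V -> R) :
  (forall t t', agree t t' jk -> g t = g t') ->
  \big[Rplus/R0]_(t | Pin jk.+1 t)
     (g t * phi (t jk) * \big[Rmult/R1]_(j : 'I_n | (j < jk.+1)%nat) FF j a b t) =
  \big[Rplus/R0]_(t | Pin jk t)
     (g t * \big[Rmult/R1]_(j : 'I_n | (j < jk)%nat) FF j a b t *
      \big[Rplus/R0]_(v : V) (phi v * FF jk a b (upd t jk v))).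
Proof.
move=> hg.
rewrite (@split_sum jk v0); last by move=> t v; apply: Pin_upd.
apply: eq_big => [t|t _]; first by rewrite Pin_S.
rewrite -sumR_scalT; apply: eq_bigr => v _.
rewrite prod_S upd_at (hg _ t); last exact: upd_agree.
have -> : \big[Rmult/R1]_(j : 'I_n | (j < jk)%nat) FF j a b (upd t jk v) =
          \big[Rmult/R1]_(j : 'I_n | (j < jk)%nat) FF j a b t.
  apply: eq_bigr => j hj; apply: FF_agree; exact: upd_agree.
ring.
Qed.

Lemma future_aux m : forall k, (k + m = n)%nat ->
  forall g : trj -> R, (forall t t', agree t t' k -> g t = g t') ->
  \big[Rplus/R0]_(t : trj) (g t * \big[Rmult/R1]_(j : 'I_n) FF j a b t) =
  \big[Rplus/R0]_(t | Pin k t) (g t * \big[Rmult/R1]_(j : 'I_n | (j < k)%nat) FF j a b t).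
Proof.
elim: m => [|m IH] k hk g hg.
  rewrite addn0 in hk; subst k.
  apply: eq_big => [t|t _].
    by symmetry; apply/forallP => l; apply/implyP; rewrite leqNgt ltn_ord.
  by congr (_ * _); apply: eq_bigl => j; rewrite ltn_ord.
have hkn : (k < n)%nat by rewrite -hk; rewrite -addSnnS leq_addr.
pose jk := Ordinal hkn.
rewrite (IH k.+1); last first.
  - move=> t t' h; apply: hg; exact: agree_le (leqnSn _) h.
  - by rewrite addSnnS.
have := @step jk g (fun _ => 1) hg.
rewrite /= => e.
transitivity (\big[Rplus/R0]_(t | Pin k.+1 t)
     (g t * 1 * \big[Rmult/R1]_(j : 'I_n | (j < k.+1)%nat) FF j a b t)).
  by apply: eq_bigr => t _; rewrite Rmult_1_r.
rewrite e; apply: eq_bigr => t _.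
rewrite (eq_bigr (fun v => FF jk a b (upd t jk v))); last by move=> v _; rewrite /= Rmult_1_l.
by rewrite FF_norm Rmult_1_r.
Qed.

Lemma future k (g : trj -> R) : (k <= n)%nat ->
  (forall t t', agree t t' k -> g t = g t') ->
  \big[Rplus/R0]_(t : trj) (g t * \big[Rmult/R1]_(j : 'I_n) FF j a b t) =
  \big[Rplus/R0]_(t | Pin k t) (g t * \big[Rmult/R1]_(j : 'I_n | (j < k)%nat) FF j a b t).
Proof. move=> hk; apply: (future_aux (m := n - k)); exact: subnKC. Qed.

End Fut.

Definition Pk (k : nat) (o : Om) : {ffun 'I_n -> option (Z1 * Z2)} :=
  [ffun j : 'I_n => if (j < k)%nat then Some (Zat j o) else None].

Definition x1v (i : 'I_n) (o : Om) : X1 := xin1 phi1 o i.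
Definition x2v (i : 'I_n) (o : Om) : X2 := xin2 phi2 o i.

Definition Qf (x1 : X1) (x2 : X2) (d : Z1 * Z2) : R :=
  \big[Rplus/R0]_(v : V)
    (if (v.1.2, v.2) == d then PS v.1.1.1 * W x1 x2 v.1.1.1 v.1.1.2 v.1.2 v.2 else 0).

Lemma map_filter_pmap (A B : Type) (P : pred A) (g : A -> B) s :
  map g (filter P s) = pmap (fun j => if P j then Some (g j) else None) s.
Proof. by elim: s => //= x s IH; case: (P x) => /=; rewrite IH. Qed.

Definition pz1 (c : {ffun 'I_n -> option (Z1 * Z2)}) : seq Z1 :=
  pmap (fun j => omap (fun z => z.1) (c j)) (enum 'I_n).
Definition pz2 (c : {ffun 'I_n -> option (Z1 * Z2)}) : seq Z2 :=
  pmap (fun j => omap (fun z => z.2) (c j)) (enum 'I_n).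

Lemma x1v_Pk (i : 'I_n) (o : Om) : x1v i o = phi1 i o.1.1 (pz1 (Pk i o)).
Proof.
rewrite /x1v /xin1 /past1 map_filter_pmap /pz1; congr (phi1 _ _ _).
by apply: eq_pmap => j; rewrite ffunE; case: (j < i)%nat.
Qed.

Lemma x2v_Pk (i : 'I_n) (o : Om) : x2v i o = phi2 i o.1.2 (pz2 (Pk i o)).
Proof.
rewrite /x2v /xin2 /past2 map_filter_pmap /pz2; congr (phi2 _ _ _).
by apply: eq_pmap => j; rewrite ffunE; case: (j < i)%nat.
Qed.

Lemma Pk_agree (k : nat) a b t t' : agree t t' k -> Pk k ((a, b), t) = Pk k ((a, b), t').
Proof.
move=> H; apply/ffunP => j; rewrite !ffunE.
by case: ifP => // hj; rewrite /Zat /= H.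
Qed.

Lemma pm_om (T : finType) (U : Om -> T) u :
  pmfRV p U u = \big[Rplus/R0]_(ab : 'I_M1 * 'I_M2) \big[Rplus/R0]_(t : trj)
     (if U (ab, t) == u then p (ab, t) else 0).
Proof. by rewrite /pmfRV big_mkcond pair_sumR. Qed.

Section Markov.
Variable v0 : V.

Lemma markov (i : 'I_n) (T : finType) (U : Om -> T) :
  (forall a b t t', agree t t' i -> U ((a, b), t) = U ((a, b), t')) ->
  (forall o o', U o = U o' -> x1v i o = x1v i o' /\ x2v i o = x2v i o') ->
  forall o d, pmfRV p (fun w => (U w, Zat i w)) (U o, d) =
    pmfRV p U (U o) * Qf (x1v i o) (x2v i o) d.
Proof.
move=> hloc hdet o d.
rewrite !pm_om big_distrl /=; apply: eq_bigr => -[a b] _.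
pose g t := if U ((a, b), t) == U o then 1 else 0.
pose ph (v : V) := if (v.1.2, v.2) == d then 1 else 0.
have gl : forall t t', agree t t' i -> g t = g t'.
  by move=> t t' h; rewrite /g (hloc a b t t' h).
transitivity (c0 * \big[Rplus/R0]_(t : trj) ((g t * ph (t i)) *
                 \big[Rmult/R1]_(j : 'I_n) FF j a b t)).
  rewrite -sumR_scalT; apply: eq_bigr => t _; rewrite pE /g /ph /Zat /= xpair_eqE.
  case: (U _ == U o); case: (_ == d) => /=; ring.
transitivity (\big[Rplus/R0]_(t : trj) (c0 * (g t * \big[Rmult/R1]_(j : 'I_n) FF j a b t))
               * Qf (x1v i o) (x2v i o) d); last first.
  congr (_ * _); apply: eq_bigr => t _; rewrite pE /g.
  case: (U _ == U o); ring.
rewrite sumR_scalT Rmult_assoc; congr (_ * _).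
rewrite (@future v0 a b i.+1 (fun t => g t * ph (t i))); last first.
  - move=> t t' h; rewrite (gl t t'); last exact: agree_le (leqnSn _) h.
    by rewrite (h i).
  - exact: ltn_ord.
rewrite (@future v0 a b i g) //; last exact: ltnW.
rewrite (@step v0 a b i g ph) // big_distrl /=.
apply: eq_bigr => t _.
rewrite /g; case: eqP => e; last by ring.
rewrite Rmult_1_l; congr (_ * _).
have [h1 h2] := hdet _ _ e.
rewrite -h1 -h2 /Qf; apply: eq_bigr => v _.
rewrite FF_upd /ph; case: (_ == d); rewrite /x1v /x2v /xin1 /xin2 /=; ring.
Qed.

End Markov.

Hypothesis hM1 : (0 < M1)%nat.
Hypothesis hM2 : (0 < M2)%nat.

Lemma peq (A B : Type) (a c : A) (b d : B) : (a, b) = (c, d) <-> a = c /\ b = d.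
Proof. by split => [[-> ->]|[-> ->]]. Qed.

Lemma PkS (i : 'I_n) (w w' : Om) :
  Pk i.+1 w = Pk i.+1 w' <-> (Zat i w, Pk i w) = (Zat i w', Pk i w').
Proof.
rewrite /Pk; split => [e|e].
  have hd : Zat i w = Zat i w'.
    by move/ffunP: e => /(_ i); rewrite !ffunE ltnSn /Zat; case=> -> ->.
  congr (_, _) => //; apply/ffunP => j; rewrite !ffunE.
  case: ifP => // hj.
  have hj1 : (j < i.+1)%nat by rewrite ltnS ltnW.
  by move/ffunP: e => /(_ j); rewrite !ffunE hj1.
have [ed ep] := proj1 (peq _ _ _ _) e.
apply/ffunP => j; rewrite !ffunE; case: ifP => // hj.
rewrite ltnS leq_eqVlt in hj; case/orP: hj => hj.
  have ji : j = i by apply: val_inj; exact/eqP.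
  by rewrite ji; exact: (f_equal Some ed).
move/ffunP: ep => /(_ j); rewrite !ffunE; by rewrite hj.
Qed.

Lemma x1det (i : 'I_n) (w w' : Om) :
  w.1.1 = w'.1.1 -> Pk i w = Pk i w' -> x1v i w = x1v i w'.
Proof. by move=> ea ep; rewrite !x1v_Pk ea ep. Qed.

Lemma x2det (i : 'I_n) (w w' : Om) :
  w.1.2 = w'.1.2 -> Pk i w = Pk i w' -> x2v i w = x2v i w'.
Proof. by move=> ea ep; rewrite !x2v_Pk ea ep. Qed.

Definition GG (k : nat) : R := JJ p (fun o : Om => o.1.1) (fun o : Om => o.1.2) (Pk k).

Lemma per_i (v0 : V) (i : 'I_n) :
  GG i.+1 - GG i <=
  JJ p (x1v i) (x2v i) (fun o => (Zat i o, Pk i o)) - JJ p (x1v i) (x2v i) (Pk i).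
Proof.
have e1 : NN p (fun w : Om => (w.1.1, w.1.2, Pk i.+1 w)) =
          NN p (fun w : Om => ((w.1.1, w.1.2, Pk i w), Zat i w)).
  apply: NN_eq => w w' /=; split.
    by case=> ea eb /PkS; rewrite /Zat; case=> ed1 ed2 ep; rewrite /Zat ea eb ed1 ed2 ep.
  rewrite /Zat; case=> ea eb ep ed1 ed2.
  have h : Pk i.+1 w = Pk i.+1 w' by apply/PkS; rewrite /Zat ed1 ed2 ep.
  by rewrite ea eb h.
have e2 : NN p (Pk i.+1) = NN p (fun w : Om => (Zat i w, Pk i w)).
  by apply: NN_eq => w w'; exact: PkS.
have e3 : NN p (fun w : Om => (w.1.1, Pk i.+1 w)) =
          NN p (fun w : Om => (w.1.1, (Zat i w, Pk i w))).
  apply: NN_eq => w w' /=; split.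
    by case=> ea /PkS; rewrite /Zat; case=> ed1 ed2 ep; rewrite /Zat ea ed1 ed2 ep.
  rewrite /Zat; case=> ea ed1 ed2 ep.
  have h : Pk i.+1 w = Pk i.+1 w' by apply/PkS; rewrite /Zat ed1 ed2 ep.
  by rewrite ea h.
have e4 : NN p (fun w : Om => (w.1.2, Pk i.+1 w)) =
          NN p (fun w : Om => (w.1.2, (Zat i w, Pk i w))).
  apply: NN_eq => w w' /=; split.
    by case=> ea /PkS; rewrite /Zat; case=> ed1 ed2 ep; rewrite /Zat ea ed1 ed2 ep.
  rewrite /Zat; case=> ea ed1 ed2 ep.
  have h : Pk i.+1 w = Pk i.+1 w' by apply/PkS; rewrite /Zat ed1 ed2 ep.
  by rewrite ea h.
have e5 : NN p (fun w : Om => (x1v i w, x2v i w, (Zat i w, Pk i w))) =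
          NN p (fun w : Om => ((x1v i w, x2v i w, Pk i w), Zat i w)).
  apply: NN_eq => w w' /=; rewrite /Zat; split.
    by case=> ea eb ed1 ed2 ep; rewrite ea eb ed1 ed2 ep.
  by case=> ea eb ep ed1 ed2; rewrite ea eb ed1 ed2 ep.
have e6 : NN p (fun w : Om => (w.1.1, Zat i w, (x1v i w, Pk i w))) =
          NN p (fun w : Om => (w.1.1, (Zat i w, Pk i w))).
  apply: NN_eq => w w' /=; rewrite /Zat; split.
    by case=> ea ed1 ed2 ex ep; rewrite ea ed1 ed2 ep.
  by case=> ea ed1 ed2 ep; rewrite (x1det ea ep) ea ed1 ed2 ep.
have e7 : NN p (fun w : Om => (w.1.1, (x1v i w, Pk i w))) =
          NN p (fun w : Om => (w.1.1, Pk i w)).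
  apply: NN_eq => w w' /=; split.
    by case=> ea ex ep; rewrite ea ep.
  by case=> ea ep; rewrite (x1det ea ep) ea ep.
have e8 : NN p (fun w : Om => (Zat i w, (x1v i w, Pk i w))) =
          NN p (fun w : Om => (x1v i w, (Zat i w, Pk i w))).
  apply: NN_eq => w w' /=; rewrite /Zat; split.
    by case=> ed1 ed2 ex ep; rewrite ed1 ed2 ex ep.
  by case=> ex ed1 ed2 ep; rewrite ed1 ed2 ex ep.
have f6 : NN p (fun w : Om => (w.1.2, Zat i w, (x2v i w, Pk i w))) =
          NN p (fun w : Om => (w.1.2, (Zat i w, Pk i w))).
  apply: NN_eq => w w' /=; rewrite /Zat; split.
    by case=> ea ed1 ed2 ex ep; rewrite ea ed1 ed2 ep.
  by case=> ea ed1 ed2 ep; rewrite (x2det ea ep) ea ed1 ed2 ep.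
have f7 : NN p (fun w : Om => (w.1.2, (x2v i w, Pk i w))) =
          NN p (fun w : Om => (w.1.2, Pk i w)).
  apply: NN_eq => w w' /=; split.
    by case=> ea ex ep; rewrite ea ep.
  by case=> ea ep; rewrite (x2det ea ep) ea ep.
have f8 : NN p (fun w : Om => (Zat i w, (x2v i w, Pk i w))) =
          NN p (fun w : Om => (x2v i w, (Zat i w, Pk i w))).
  apply: NN_eq => w w' /=; rewrite /Zat; split.
    by case=> ed1 ed2 ex ep; rewrite ed1 ed2 ex ep.
  by case=> ex ed1 ed2 ep; rewrite ed1 ed2 ex ep.
have hl1 : forall a b t t', agree t t' i ->
    (fun w : Om => (w.1.1, w.1.2, Pk i w)) ((a, b), t) =
    (fun w : Om => (w.1.1, w.1.2, Pk i w)) ((a, b), t').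
  by move=> a b t t' h /=; rewrite (Pk_agree a b h).
have hd1 : forall o o' : Om,
    (fun w : Om => (w.1.1, w.1.2, Pk i w)) o = (fun w : Om => (w.1.1, w.1.2, Pk i w)) o' ->
    x1v i o = x1v i o' /\ x2v i o = x2v i o'.
  move=> o o' /=; case=> ea eb ep; split; [exact: x1det ea ep | exact: x2det eb ep].
have hl2 : forall a b t t', agree t t' i ->
    (fun w : Om => (x1v i w, x2v i w, Pk i w)) ((a, b), t) =
    (fun w : Om => (x1v i w, x2v i w, Pk i w)) ((a, b), t').
  move=> a b t t' h /=; rewrite (Pk_agree a b h) /x1v /x2v /xin1 /xin2 /=.
  by rewrite (past1_agree h) (past2_agree h).
have hd2 : forall o o' : Om,
    (fun w : Om => (x1v i w, x2v i w, Pk i w)) o = (fun w : Om => (x1v i w, x2v i w, Pk i w)) o' ->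
    x1v i o = x1v i o' /\ x2v i o = x2v i o'.
  by move=> o o' /=; case=> ea eb ep.
have m1 := NN_markov p0 (@markov v0 i _ _ hl1 hd1).
have m2 := NN_markov p0 (@markov v0 i _ _ hl2 hd2).
have j1 := JJ_ge0 p0 (fun w : Om => w.1.1) (Zat i) (fun w => (x1v i w, Pk i w)).
have j2 := JJ_ge0 p0 (fun w : Om => w.1.2) (Zat i) (fun w => (x2v i w, Pk i w)).
rewrite /JJ /= in j1 j2 *.
rewrite /GG /JJ /=.
rewrite e1 e2 e3 e4 e5 m1 m2.
rewrite e6 e7 e8 in j1; rewrite f6 f7 f8 in j2.
set A1 := NN p (fun w : Om => (w.1.1, (Zat i w, Pk i w))) in j1 *.
set A2 := NN p (fun w : Om => (x1v i w, Pk i w)) in j1 *.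
set A3 := NN p (fun w : Om => (w.1.1, Pk i w)) in j1 *.
set A4 := NN p (fun w : Om => (x1v i w, (Zat i w, Pk i w))) in j1 *.
set B1 := NN p (fun w : Om => (w.1.2, (Zat i w, Pk i w))) in j2 *.
set B2 := NN p (fun w : Om => (x2v i w, Pk i w)) in j2 *.
set B3 := NN p (fun w : Om => (w.1.2, Pk i w)) in j2 *.
set B4 := NN p (fun w : Om => (x2v i w, (Zat i w, Pk i w))) in j2 *.
set C1 := NN p (fun w : Om => (w.1.1, w.1.2, Pk i w)).
set C2 := NN p (fun w : Om => (x1v i w, x2v i w, Pk i w)).
set C3 := NN p (fun w : Om => (Zat i w, Pk i w)).
set C4 := NN p (Pk i).
set E := \big[Rplus/R0]_(w : Om) (p w * lnp (Qf (x1v i w) (x2v i w) (Zat i w))).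
lra.
Qed.

Section G0.
Variable v0 : V.

Lemma sum_t a b : \big[Rplus/R0]_(t : trj) p ((a, b), t) = c0.
Proof.
transitivity (c0 * \big[Rplus/R0]_(t : trj) ((fun _ => 1) t * \big[Rmult/R1]_(j : 'I_n) FF j a b t)).
  rewrite -sumR_scalT; apply: eq_bigr => t _; rewrite pE /=; ring.
rewrite (@future v0 a b 0 (fun _ => 1)) //.
rewrite (big_pred1 [ffun=> v0]); last first.
  move=> t; rewrite /Pin /=; apply/forallP/eqP => [H|->].
    by apply/ffunP => l; rewrite ffunE; apply/eqP; have := H l.
  by move=> l; rewrite ffunE eqxx.
rewrite big_pred0 //; ring.
Qed.

Lemma pm_first (T : finType) (f : 'I_M1 * 'I_M2 -> T) u :
  pmfRV p (fun o : Om => f o.1) u =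
  \big[Rplus/R0]_(ab : 'I_M1 * 'I_M2) (if f ab == u then c0 else 0).
Proof.
rewrite pm_om; apply: eq_bigr => -[a b] _ /=.
case: (f (a, b) == u); first exact: sum_t.
by apply: big1.
Qed.

Lemma total : \big[Rplus/R0]_(w : Om) p w = 1.
Proof.
transitivity (pmfRV p (fun o : Om => (fun _ => tt) o.1) tt).
  by rewrite /pmfRV; apply: eq_bigl.
rewrite (pm_first (fun _ => tt)) /=.
rewrite (eq_bigr (fun _ => c0)) // sumR_const card_prod !card_ord mult_INR /c0.
have h1 : INR M1 <> 0 by apply: not_0_INR; apply/eqP; rewrite -lt0n.
have h2 : INR M2 <> 0 by apply: not_0_INR; apply/eqP; rewrite -lt0n.
by field.
Qed.

Lemma NN_const (T : finType) (U : Om -> T) k :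
  (forall w, pmfRV p U (U w) = k) -> NN p U = lnp k.
Proof.
move=> H; rewrite /NN (eq_bigr (fun w => p w * lnp k)); last by move=> w _; rewrite H.
by rewrite -big_distrl /= total Rmult_1_l.
Qed.

Lemma Pk0 (w : Om) : Pk 0 w = [ffun=> None].
Proof. by apply/ffunP => j; rewrite !ffunE ltn0. Qed.

Lemma GG0 : GG 0 = 0.
Proof.
have h1 : INR M1 <> 0 by apply: not_0_INR; apply/eqP; rewrite -lt0n.
have h2 : INR M2 <> 0 by apply: not_0_INR; apply/eqP; rewrite -lt0n.
have p1 : 0 < INR M1 by apply: lt_0_INR; apply/ltP.
have p2 : 0 < INR M2 by apply: lt_0_INR; apply/ltP.
rewrite /GG /JJ.
rewrite (@NN_const _ _ c0); last first.
  move=> w.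
  rewrite (_ : pmfRV p _ _ = pmfRV p (fun o : Om => (fun ab => (ab.1, ab.2, [ffun=> None] : {ffun 'I_n -> option (Z1 * Z2)})) o.1) (w.1.1, w.1.2, [ffun=> None])); last first.
    by rewrite /pmfRV; apply: eq_bigl => o; rewrite !Pk0.
  rewrite (pm_first (fun ab => (ab.1, ab.2, [ffun=> None] : {ffun 'I_n -> option (Z1 * Z2)}))) -big_mkcond /= (big_pred1 w.1) //.
  move=> [a b]; rewrite /= !xpair_eqE eqxx andbT; case: w => -[a0 b0] t /=; by rewrite xpair_eqE.
rewrite (@NN_const _ _ 1); last first.
  move=> w; rewrite -total /pmfRV; apply: eq_bigl => o; by rewrite !Pk0 eqxx.
rewrite (@NN_const _ _ (INR M2 * c0)); last first.
  move=> w.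
  rewrite (_ : pmfRV p _ _ = pmfRV p (fun o : Om => (fun ab => ab.1) o.1) w.1.1); last first.
    by rewrite /pmfRV; apply: eq_bigl => o; rewrite !Pk0 xpair_eqE eqxx andbT.
  rewrite (pm_first (fun ab => ab.1)) pair_sumR /= (bigD1 w.1.1) //= eqxx.
  rewrite [X in _ + X = _]big1; last by move=> a ha; apply: big1 => b _; rewrite (negbTE ha).
  by rewrite sumR_const card_ord Rplus_0_r.
rewrite (@NN_const _ _ (INR M1 * c0)); last first.
  move=> w.
  rewrite (_ : pmfRV p _ _ = pmfRV p (fun o : Om => (fun ab => ab.2) o.1) w.1.2); last first.
    by rewrite /pmfRV; apply: eq_bigl => o; rewrite !Pk0 xpair_eqE eqxx andbT.
  rewrite (pm_first (fun ab => ab.2)) pair_sumR /=.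
  rewrite (eq_bigr (fun _ => c0)); last first.
    move=> a _; rewrite (bigD1 w.1.2) //= eqxx big1 ?Rplus_0_r //.
    by move=> b /negbTE ->.
  by rewrite sumR_const card_ord.
have c0p : 0 < c0 by rewrite /c0; apply: Rmult_lt_0_compat; apply: Rinv_0_lt_compat.
have q1 : 0 < INR M2 * c0 by apply: Rmult_lt_0_compat.
have q2 : 0 < INR M1 * c0 by apply: Rmult_lt_0_compat.
rewrite !lnp_pos //; try lra.
have -> : INR M2 * c0 = / INR M1 by rewrite /c0; field.
have -> : INR M1 * c0 = / INR M2 by rewrite /c0; field.
rewrite /c0 ln_mult ?ln_1; try (apply: Rinv_0_lt_compat; lra).
ring.
Qed.

End G0.

Lemma telescope (G : nat -> R) m :
  \big[Rplus/R0]_(i < m) (G i.+1 - G i) = G m - G 0%nat.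
Proof.
elim: m => [|m IH]; first by rewrite big_ord0; ring.
by rewrite big_ord_recr /= IH; ring.
Qed.

Lemma main_sec (v0 : V) :
  \big[Rplus/R0]_(i : 'I_n) condMI p (x1v i) (x2v i) (Pk i) <=
  \big[Rplus/R0]_(i : 'I_n) condMI p (x1v i) (x2v i) (fun o => (Zat i o, Pk i o)).
Proof.
under eq_bigr do rewrite (condMI_J p0).
under [X in _ <= X]eq_bigr do rewrite (condMI_J p0).
rewrite !sumR_scalT.
have il : 0 < / ln 2 by apply: Rinv_0_lt_compat; exact: ln2_pos.
apply: Rmult_le_compat_l; first lra.
have := @sumR_le _ xpredT (fun i : 'I_n => GG i.+1 - GG i)
  (fun i : 'I_n => JJ p (x1v i) (x2v i) (fun o => (Zat i o, Pk i o)) - JJ p (x1v i) (x2v i) (Pk i))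
  (fun i _ => per_i v0 i).
rewrite (telescope GG n) (GG0 v0) sumR_sub.
have := JJ_ge0 p0 (fun o : Om => o.1.1) (fun o : Om => o.1.2) (Pk n).
rewrite -/(GG n).
lra.
Qed.

End Model.

Lemma condMI_empty (Om A B C : finType) (p : Om -> R) (h : Om -> False)
  (X : Om -> A) (Y : Om -> B) (Z : Om -> C) : condMI p X Y Z = 0.
Proof.
rewrite /condMI /Rsum; apply: big1 => a _; apply: big1 => b _; apply: big1 => c _.
have -> : pmfRV p (fun w => (X w, Y w, Z w)) (a, b, c) = 0.
  by apply: big1 => w; case: (h w).
by case: Rlt_dec => //= hh; lra.
Qed.

Close Scope R_scope.
Unset Implicit Arguments.

Theorem mainTheorem4 (M1 M2 n : nat) (S Y Z1 Z2 X1 X2 : finType)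
    (PS : S -> R) (W : X1 -> X2 -> S -> Y -> Z1 -> Z2 -> R)
    (phi1 : 'I_n -> 'I_M1 -> seq Z1 -> X1)
    (phi2 : 'I_n -> 'I_M2 -> seq Z2 -> X2) :
  (0 < M1)%N -> (0 < M2)%N ->
  (forall s, (0 <= PS s)%R) -> Rsum PS = 1%R ->
  (forall x1 x2 s y z1 z2, (0 <= W x1 x2 s y z1 z2)%R) ->
  (forall x1 x2 s,
     Rsum (fun yz : Y * Z1 * Z2 => W x1 x2 s yz.1.1 yz.1.2 yz.2) = 1%R) ->
  let p := codePmf PS W phi1 phi2 in
  (\big[Rplus/R0]_(i : 'I_n)
      condMI p (fun o => xin1 phi1 o i) (fun o => xin2 phi2 o i) (Zpast i)
   <= \big[Rplus/R0]_(i : 'I_n)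
      condMI p (fun o => xin1 phi1 o i) (fun o => xin2 phi2 o i)
        (fun o => (Zat i o, Zpast i o)))%R.
Proof.
move=> hM1 hM2 hPS0 hPS1 hW0 hW1 p.
case: (pickP (fun _ : S * Y * Z1 * Z2 => true)) => [v0 _|hnone].
  exact: (main_sec phi1 phi2 hPS0 hPS1 hW0 hW1 hM1 hM2 v0).
apply: (@sumR_le _ xpredT) => i _.
have h : omega M1 M2 n S Y Z1 Z2 -> False.
  by move=> o; have := hnone (o.2 i).
rewrite !(condMI_empty _ h); exact: Rle_refl.
Qed.
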